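(* Let $\mathcal{L}$ be a square lattice. Then there exist natural numbers $n_1, \ldots, n_t$ such that $\mathcal{L}$ is isomorphic (as a lattice) to the product $c(n_1) \times c(n_2) \times \cdots \times c(n_t)$ of chain lattices.
   Context: All lattices are finite distributive. $x \in \mathcal{L}$ is join-irreducible if $x = y\vee z$ implies $x=y$ or $x=z$ (so the minimum of $\mathcal{L}$, called the root, is join-irreducible); $J(\mathcal{L})$ is the poset of join-irreducibles. $\mathcal{L}$ is a tree lattice if the Hasse diagram of $J(\mathcal{L})$ is a tree; a square lattice is a tree lattice in which every vertex of this Hasse diagram other than the root has degree at most two. $c(n)$ denotes the totally ordered lattice (chain) with $n$ elements; products of lattices carry the componentwise order. *)

(* Defs.v *)
From HB Require Import structures.
From mathcomp Require Import all_boot all_order.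
Set Implicit Arguments. Unset Strict Implicit. Unset Printing Implicit Defensive.
Import Order.TTheory.
Local Open Scope order_scope.

Section SquareLattice.
Context {disp : Order.disp_t} {L : finTBDistrLatticeType disp}.

(* x is join-irreducible: x = y `|` z implies x = y or x = z
   (so the root \bot is join-irreducible). *)
Definition join_irr (x : L) : bool :=
  [forall y : L, forall z : L, (x == y `|` z) ==> (x == y) || (x == z)].

Definition Jcovers (x y : L) : bool :=
  [&& join_irr x, join_irr y, x < y &
      [forall z : L, ~~ [&& join_irr z, x < z & z < y]]].

Definition hasseJ (x y : L) : bool := Jcovers x y || Jcovers y x.

Definition hasseJ_connected : Prop :=
  forall x y : L, join_irr x -> join_irr y -> connect hasseJ x y.

Definition hasseJ_acyclic : Prop :=
  forall s : seq L, uniq s -> 3 <= size s -> ~~ cycle hasseJ s.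

Definition tree_lattice : Prop := hasseJ_connected /\ hasseJ_acyclic.

Definition square_lattice : Prop :=
  tree_lattice /\
  forall x : L, join_irr x -> x != \bot -> #|[set y | hasseJ x y]| <= 2.

End SquareLattice.

(* Main.v *)
Require Import Defs.
From HB Require Import structures.
From mathcomp Require Import all_boot all_order.
Set Implicit Arguments. Unset Strict Implicit. Unset Printing Implicit Defensive.
Import Order.TTheory.
Local Open Scope order_scope.

Section Proofs.
Variables (disp : Order.disp_t) (L : finTBDistrLatticeType disp).
Implicit Types x y z p q r a b u v w : L.

Definition hh x := #|[set w : L | w < x]|.
Lemma hh_lt x y : x < y -> (hh x < hh y)%N.
Proof.
move=> lt; apply: proper_card; apply/properP; split.
  by apply/subsetP=> w; rewrite !inE => wx; exact: lt_trans wx lt.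
by exists x; rewrite !inE ?ltxx.
Qed.
Definition hu x := #|[set w : L | x < w]|.
Lemma hu_lt x y : x < y -> (hu y < hu x)%N.
Proof.
move=> lt; apply: proper_card; apply/properP; split.
  by apply/subsetP=> w; rewrite !inE => wx; exact: lt_trans lt wx.
by exists y; rewrite !inE ?ltxx.
Qed.

Lemma ji_bot : join_irr (\bot : L).
Proof.
apply/forallP=> y; apply/forallP=> z; apply/implyP=> /eqP e.
by rewrite eq_le le0x e leUl.
Qed.

Lemma ji_le p x y : join_irr p -> p <= x `|` y -> (p <= x) || (p <= y).
Proof.
move=> /forallP/(_ (p `&` x))/forallP/(_ (p `&` y))/implyP H le.
have : p == (p `&` x) `|` (p `&` y) by rewrite -meetUr; move/meet_idPl: le => ->.
by move/H; rewrite ![p == _]eq_sym -!leEmeet.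
Qed.

Lemma le_ji x y : (forall p, join_irr p -> p <= x -> p <= y) -> x <= y.
Proof.
have [n] : exists n, (hh x < n)%N by exists (hh x).+1.
elim: n x => // n IH x hx H.
case: (boolP (join_irr x)) => [jx|]; first exact: H.
move/forallPn=> [u] /forallPn [v]; rewrite negb_imply negb_or => /andP [/eqP e /andP[nu nv]].
have ux : u < x by rewrite lt_neqAle eq_sym nu e leUl.
have vx : v < x by rewrite lt_neqAle eq_sym nv e leUr.
rewrite e leUx; apply/andP; split; apply: IH => [|p jp pl].
- exact: leq_trans (hh_lt ux) _.
- by apply: H => //; exact: le_trans pl (ltW ux).
- exact: leq_trans (hh_lt vx) _.
- by apply: H => //; exact: le_trans pl (ltW vx).
Qed.

Lemma Jcov_lt a b : Jcovers a b -> a < b.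
Proof. by case/and4P. Qed.

Lemma cover_below p r : join_irr p -> join_irr r -> p < r ->
  exists z, [/\ join_irr z, p <= z & Jcovers z r].
Proof.
move=> jp jr pr.
pose P := fun z : L => join_irr z && (p <= z) && (z < r).
have Pp : P p by rewrite /P jp lexx pr.
case: (arg_maxnP hh Pp) => z /andP[/andP[jz pz] zr] zmax.
exists z; split=> //.
rewrite /Jcovers jz jr zr /=; apply/forallP=> w; apply/negP=> /and3P[jw zw wr].
have := zmax w; rewrite /P jw wr (le_trans pz (ltW zw)) => /(_ isT).
by rewrite /= leqNgt hh_lt.
Qed.

Lemma cover_above r p : join_irr r -> join_irr p -> r < p ->
  exists z, [/\ join_irr z, Jcovers r z & z <= p].
Proof.
move=> jr jp rp.
pose P := fun z : L => join_irr z && (r < z) && (z <= p).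
have Pp : P p by rewrite /P jp lexx rp.
case: (arg_minnP hh Pp) => z /andP[/andP[jz rz] zp] zmin.
exists z; split=> //.
rewrite /Jcovers jz jr rz /=; apply/forallP=> w; apply/negP=> /and3P[jw rw wz].
have := zmin w; rewrite /P jw rw (le_trans (ltW wz) zp) => /(_ isT).
by rewrite /= leqNgt hh_lt.
Qed.

Definition Rx x : rel L := fun u v => [&& hasseJ u v, u != x & v != x].

Lemma Rx_sym x : symmetric (Rx x).
Proof.
by move=> u v; rewrite /Rx /hasseJ orbC; case: (u != x); case: (v != x); rewrite ?andbT ?andbF.
Qed.

Lemma path_neq x a s : path (Rx x) a s -> s != [::] -> all (fun y => y != x) (a :: s).
Proof.
elim: s a => // b s IH a /= /andP[/and3P[_ ax bx] pb] _.
rewrite ax /=; case: s IH pb => [|c s] IH pb; first by rewrite bx.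
exact: (IH b pb).
Qed.

Lemma cycle_contra x a b : hasseJ_acyclic (L:=L) -> hasseJ x a -> hasseJ x b -> a != b ->
  connect (Rx x) a b -> False.
Proof.
move=> acy xa xb ab /connectP [s ps bl].
move: ab xb; rewrite {}bl; case: (shortenP ps) => s' ps' us' _ ab xb.
have s'n : s' != [::] by case: s' ps' us' ab xb => //=; rewrite eqxx.
have := path_neq ps' s'n => /allP allx.
have xn : x \notin a :: s' by apply/negP=> /allx; rewrite eqxx.
have := acy (x :: a :: s'); rewrite cons_uniq xn us' /=.
have s3 : (3 <= (size s').+2)%N by case: s' s'n {ps' us' ab xb allx xn}.
move/(_ isT s3); rewrite /cycle /= xa /= rcons_path.
have -> : path hasseJ a s' by apply: sub_path ps' => u v /andP[].
move: xb; by rewrite /hasseJ orbC => ->.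
Qed.

Lemma down_conn x y : join_irr y -> y < x -> connect (Rx x) y \bot.
Proof.
have [n] : exists n, (hh y < n)%N by exists (hh y).+1.
elim: n y => // n IH y hy jy yx.
case: (eqVneq y \bot) => [->|yb]; first exact: connect0.
have [z [jz _ zy]] := cover_below ji_bot jy (ltac:(by rewrite lt0x)).
have zy' := Jcov_lt zy.
apply: connect_trans (connect1 _) (IH z _ jz (lt_trans zy' yx)).
  by rewrite /Rx /hasseJ zy orbT (lt_eqF yx) (lt_eqF (lt_trans zy' yx)).
exact: leq_trans (hh_lt zy') _.
Qed.

Lemma lcover_uniq x a b : hasseJ_acyclic (L:=L) -> Jcovers a x -> Jcovers b x -> a = b.
Proof.
move=> acy ax bx; apply/eqP/negPn/negP => ab.
have [ja jb] : join_irr a /\ join_irr b by case/and4P: ax; case/and4P: bx.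
apply: (@cycle_contra x a b acy _ _ ab).
- by rewrite /hasseJ ax orbT.
- by rewrite /hasseJ bx orbT.
apply: connect_trans (down_conn ja (Jcov_lt ax)) _.
by rewrite (sym_connect_sym (@Rx_sym x)); exact: down_conn jb (Jcov_lt bx).
Qed.

Lemma ucover_uniq r u1 u2 : square_lattice (L:=L) -> join_irr r -> r != \bot ->
  Jcovers r u1 -> Jcovers r u2 -> u1 = u2.
Proof.
move=> [_ deg] jr rb r1 r2; apply/eqP/negPn/negP => u12.
have [l [jl _ lr]] := cover_below ji_bot jr (ltac:(by rewrite lt0x)).
have l1 : l < u1 := lt_trans (Jcov_lt lr) (Jcov_lt r1).
have l2 : l < u2 := lt_trans (Jcov_lt lr) (Jcov_lt r2).
have : (#|[:: l; u1; u2]| <= #|[set y | hasseJ r y]|)%N.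
  apply/subset_leq_card/subsetP => y; rewrite !inE => /or3P[]/eqP->;
  by rewrite /hasseJ ?lr ?r1 ?r2 ?orbT.
rewrite (card_uniqP _); last by rewrite /= !inE negb_or (lt_eqF l1) (lt_eqF l2) u12.
move=> H; have := leq_trans H (deg r jr rb); by [].
Qed.

Lemma comp_below r p q : hasseJ_acyclic (L:=L) -> join_irr r -> join_irr p -> join_irr q ->
  p <= r -> q <= r -> (p <= q) || (q <= p).
Proof.
move=> acy; have [n] : exists n, (hh r < n)%N by exists (hh r).+1.
elim: n r p q => // n IH r p q hr jr jp jq pr qr.
case: (eqVneq p r) => [->|pr']; first by rewrite qr orbT.
case: (eqVneq q r) => [->|qr']; first by rewrite pr.
have [z1 [jz1 pz1 c1]] := cover_below jp jr (ltac:(by rewrite lt_neqAle pr' pr)).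
have [z2 [jz2 qz2 c2]] := cover_below jq jr (ltac:(by rewrite lt_neqAle qr' qr)).
have e := lcover_uniq acy c1 c2; subst z2.
apply: (IH z1) => //; exact: leq_trans (hh_lt (Jcov_lt c1)) _.
Qed.

Lemma comp_above r p q : square_lattice (L:=L) -> join_irr r -> r != \bot ->
  join_irr p -> join_irr q -> r <= p -> r <= q -> (p <= q) || (q <= p).
Proof.
move=> sq; have [n] : exists n, (hu r < n)%N by exists (hu r).+1.
elim: n r p q => // n IH r p q hr jr rb jp jq rp rq.
case: (eqVneq p r) => [->|pr']; first by rewrite rq.
case: (eqVneq q r) => [->|qr']; first by rewrite rp orbT.
have [z1 [jz1 c1 pz1]] := cover_above jr jp (ltac:(by rewrite lt_neqAle eq_sym pr' rp)).
have [z2 [jz2 c2 qz2]] := cover_above jr jq (ltac:(by rewrite lt_neqAle eq_sym qr' rq)).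
have e := ucover_uniq sq jr rb c1 c2; subst z2.
apply: (IH z1) => //.
- exact: leq_trans (hu_lt (Jcov_lt c1)) _.
- by rewrite -lt0x (le_lt_trans (le0x r) (Jcov_lt c1)).
Qed.

Definition AT : {set L} := [set a : L | Jcovers \bot a].
Definition CC a : {set L} := [set q : L | join_irr q && (a <= q)].
Definition DD a x : {set L} := [set q : L | [&& join_irr q, a <= q & q <= x]].

Lemma atomP a : a \in AT -> [/\ join_irr a, a != \bot &
   forall w, join_irr w -> w < a -> w = \bot].
Proof.
rewrite inE => /and4P[_ ja ba /forallP H]; split => //; first by rewrite -lt0x.
move=> w jw wa; case: (eqVneq w \bot) => // wb.
by have := H w; rewrite jw wa lt0x wb.
Qed.

Lemma atom_below p : join_irr p -> p != \bot -> exists2 a, a \in AT & a <= p.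
Proof.
move=> jp pb.
pose P := fun z : L => [&& join_irr z, z != \bot & z <= p].
have Pp : P p by rewrite /P jp pb lexx.
case: (arg_minnP hh Pp) => z /and3P[jz zb zp] zmin.
exists z => //; rewrite inE /Jcovers ji_bot jz lt0x zb /=.
apply/forallP=> w; apply/negP=> /and3P[jw bw wz].
have := zmin w; rewrite /P jw -lt0x bw (le_trans (ltW wz) zp) => /(_ isT).
by rewrite /= leqNgt hh_lt.
Qed.

Lemma atom_le a1 a2 : a1 \in AT -> a2 \in AT -> a1 <= a2 -> a1 = a2.
Proof.
move=> /atomP[j1 b1 _] /atomP[_ _ H] le.
case: (eqVneq a1 a2) => // ne.
by move: b1; rewrite (H a1 j1) ?eqxx // lt_neqAle ne le.
Qed.

Lemma atom_uniq a1 a2 p : hasseJ_acyclic (L:=L) -> a1 \in AT -> a2 \in AT ->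
  join_irr p -> a1 <= p -> a2 <= p -> a1 = a2.
Proof.
move=> acy A1 A2 jp l1 l2.
have [j1 _ _] := atomP A1; have [j2 _ _] := atomP A2.
case/orP: (comp_below acy jp j1 j2 l1 l2) => le; first exact: atom_le.
by apply/esym/atom_le.
Qed.

Lemma DD_sub a x : DD a x \subset CC a.
Proof. by apply/subsetP=> q; rewrite !inE => /and3P[-> ->]. Qed.

Lemma DD_nested a x y : square_lattice (L:=L) -> a \in AT ->
  (DD a x \subset DD a y) || (DD a y \subset DD a x).
Proof.
move=> sq aA; have [ja ab _] := atomP aA.
case: (boolP (DD a x \subset DD a y)) => //= /subsetPn [q].
rewrite !inE => /and3P[jq aq qx]; rewrite jq aq /= => nqy.
apply/subsetP => q'; rewrite !inE => /and3P[jq' aq' q'y]; rewrite jq' aq' /=.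
case/orP: (comp_above sq ja ab jq jq' aq aq') => le.
  by rewrite (le_trans le q'y) in nqy.
exact: le_trans le qx.
Qed.

Lemma DD_join a x y : DD a (x `|` y) = DD a x :|: DD a y.
Proof.
apply/setP => q; rewrite !inE.
case jq: (join_irr q); case: (a <= q) => //=.
apply/idP/idP; first exact: ji_le.
by case/orP => le; [apply: le_trans le (leUl _ _) | apply: le_trans le (leUr _ _)].
Qed.

Lemma DD_meet a x y : DD a (x `&` y) = DD a x :&: DD a y.
Proof.
apply/setP => q; rewrite !inE lexI.
by case: (join_irr q); case: (a <= q).
Qed.

Lemma card_join a x y : square_lattice (L:=L) -> a \in AT ->
  #|DD a (x `|` y)| = maxn #|DD a x| #|DD a y|.
Proof.
move=> sq aA; rewrite DD_join.
case/orP: (DD_nested x y sq aA) => sub.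
  by rewrite (setUidPr sub); apply/esym/maxn_idPr/subset_leq_card.
by rewrite (setUidPl sub); apply/esym/maxn_idPl/subset_leq_card.
Qed.

Lemma card_meet a x y : square_lattice (L:=L) -> a \in AT ->
  #|DD a (x `&` y)| = minn #|DD a x| #|DD a y|.
Proof.
move=> sq aA; rewrite DD_meet.
case/orP: (DD_nested x y sq aA) => sub.
  by rewrite (setIidPl sub); apply/esym/minn_idPl/subset_leq_card.
by rewrite (setIidPr sub); apply/esym/minn_idPr/subset_leq_card.
Qed.

Lemma DD_bot a : a \in AT -> DD a \bot = set0.
Proof.
move=> /atomP[_ ab _]; apply/setP => q; rewrite !inE lex0.
apply/negP => /and3P[_ aq /eqP qb]; move: aq; rewrite qb lex0.
by rewrite (negbTE ab).
Qed.

Lemma chain_elem a k : square_lattice (L:=L) -> a \in AT -> (k <= #|CC a|)%N ->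
  exists y, #|DD a y| = k /\ forall b, b \in AT -> b != a -> #|DD b y| = 0.
Proof.
move=> sq aA; have [[_ acy] _] := sq; have [ja ab _] := atomP aA.
elim: k => [|k IH] hk.
  by exists \bot; rewrite DD_bot ?cards0 //; split => // b bA _; rewrite DD_bot ?cards0.
have [y [Dy Do]] := IH (ltnW hk).
have : ~~ (CC a \subset DD a y).
  by apply/negP => sub; have := subset_leq_card sub; rewrite Dy leqNgt hk.
case/subsetPn => q0 q0C q0D.
pose P := fun q => (q \in CC a) && (q \notin DD a y).
have Pq0 : P q0 by rewrite /P q0C q0D.
case: (arg_minnP hh Pq0) => q /andP[qC qD] qmin.
have := qC; rewrite inE => /andP[jq aq].
have qy : ~~ (q <= y) by move: qD; rewrite inE jq aq.
exists q; split.
  have -> : DD a q = q |: DD a y.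
    apply/setP => q'; rewrite !inE; apply/idP/idP.
      case/and3P => jq' aq' q'q; case: (eqVneq q' q) => //= ne.
      case q'y: (q' <= y); first by rewrite jq' aq'.
      have := qmin q'; rewrite /P !inE jq' aq' q'y /= => /(_ isT).
      by rewrite leqNgt hh_lt // lt_neqAle ne q'q.
    case/orP => [/eqP-> | /and3P[jq' aq' q'y]]; first by rewrite jq aq lexx.
    rewrite jq' aq' /=.
    case/orP: (comp_above sq ja ab jq jq' aq aq') => // le.
    by rewrite (le_trans le q'y) in qy.
  by rewrite cardsU1 qD Dy add1n.
move=> b bA ba; apply/eqP; rewrite cards_eq0; apply/eqP/setP => q'; rewrite !inE.
apply/negP => /and3P[jq' bq' q'q].
have e := atom_uniq acy bA aA jq (le_trans bq' q'q) aq.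
by rewrite e eqxx in ba.
Qed.

Definition atm (i : 'I_#|AT|) : L := enum_val i.
Lemma atmP i : atm i \in AT. Proof. exact: enum_valP. Qed.
Definition nn (i : 'I_#|AT|) := #|CC (atm i)|.+1.
Lemma DD_lt x i : (#|DD (atm i) x| < nn i)%N.
Proof. by rewrite ltnS subset_leq_card // DD_sub. Qed.
Definition ff (x : L) : {dffun forall i : 'I_#|AT|, 'I_(nn i)} :=
  [ffun i => Ordinal (DD_lt x i)].
Lemma ffE x i : nat_of_ord (ff x i) = #|DD (atm i) x|.
Proof. by rewrite ffunE. Qed.

Lemma key_le x y : (forall a, a \in AT -> DD a x = DD a y) -> x <= y.
Proof.
move=> E; apply: le_ji => p jp px.
case: (eqVneq p \bot) => [->|pb]; first exact: le0x.
have [a aA ap] := atom_below jp pb.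
have : p \in DD a x by rewrite inE jp ap px.
by rewrite E // inE => /and3P[].
Qed.

Lemma ff_inj : square_lattice (L:=L) -> injective ff.
Proof.
move=> sq x y e.
have E : forall a, a \in AT -> DD a x = DD a y.
  move=> a aA; pose i := enum_rank_in aA a.
  have ai : atm i = a := enum_rankK_in aA aA.
  have c : #|DD a x| = #|DD a y| by rewrite -ai -!ffE e.
  case/orP: (DD_nested x y sq aA) => sub; apply/eqP.
    by rewrite eqEcard sub c leqnn.
  by rewrite eq_sym eqEcard sub c leqnn.
by apply/eqP; rewrite eq_le !key_le // => a aA; rewrite E.
Qed.

Lemma ff_surj : square_lattice (L:=L) -> forall g, exists x, ff x = g.
Proof.
move=> sq g.
have build : forall s : seq 'I_#|AT|, uniq s -> exists x,
    forall j, #|DD (atm j) x| = if j \in s then nat_of_ord (g j) else 0%N.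
  elim => [|i s IH] /=.
    by move=> _; exists \bot => j; rewrite DD_bot ?cards0 // atmP.
  case/andP => nis us; have [x Hx] := IH us.
  have [y [Dy Do]] := chain_elem (a:=atm i) (k:=g i) sq (atmP i) (ltn_ord (g i)).
  exists (x `|` y) => j; rewrite card_join ?atmP // Hx in_cons.
  case: (eqVneq j i) => [->|ji] /=; first by rewrite (negbTE nis) Dy max0n.
  rewrite Do ?maxn0 ?atmP //; apply/eqP => /enum_val_inj e.
  by rewrite e eqxx in ji.
have [x Hx] := build _ (enum_uniq 'I_#|AT|).
exists x; apply/ffunP => j; apply/val_inj; rewrite /= ffE Hx mem_enum.
by [].
Qed.

Lemma ff_bij : square_lattice (L:=L) -> bijective ff.
Proof.
move=> sq.
exists (fun g => odflt \bot [pick x | ff x == g]).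
  move=> x; case: pickP => [x' /eqP e|/(_ x)]; last by rewrite eqxx.
  exact: ff_inj e.
move=> g; case: pickP => [x' /eqP //|H].
by have [x e] := ff_surj sq g; move: (H x); rewrite e eqxx.
Qed.

End Proofs.

Theorem mainTheorem8 (disp : Order.disp_t) (L : finTBDistrLatticeType disp) :
  @square_lattice disp L ->
  exists (t : nat) (n : 'I_t -> nat)
         (f : L -> {dffun forall i : 'I_t, 'I_(n i)}),
    bijective f /\
    (forall (x y : L) (i : 'I_t),
        nat_of_ord (f (x `|` y) i) = maxn (f x i) (f y i)) /\
    (forall (x y : L) (i : 'I_t),
        nat_of_ord (f (x `&` y) i) = minn (f x i) (f y i)).
Proof.
move=> sq; exists #|AT L|, (@nn _ L), (@ff _ L); split; first exact: ff_bij.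
split=> x y i; rewrite !ffE.
  exact: card_join (atmP i).
exact: card_meet (atmP i).
Qed.
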